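(* Let $\lambda\in k^*$, $E,P\in GL_m(k)$ and $F,Q\in GL_n(k)$. Then $H(\lambda E,\lambda F)=H(E,F)$, and there are algebra isomorphisms $H(E,F)\cong H(PEP^{-1},QFQ^{-1})$ and $H(E,F)\cong H({}^tE^{-1},{}^tF^{-1})$.
   Context: $k$ is a field. For $E\in GL_m(k)$, $F\in GL_n(k)$, $H(E,F)$ is the universal algebra with generators $u_{ij},v_{ij}$, $1\le i\le m$, $1\le j\le n$, and relations $u\,{}^tv=I_m=v\,F\,{}^tu\,E^{-1}$ and ${}^tv\,u=I_n=F\,{}^tu\,E^{-1}v$, where $u=(u_{ij})$, $v=(v_{ij})$. *)

(* Defs.v *)
(* The free associative k-algebra is modelled with the
   monoid algebra {malg k[{fmonom X}]} of the free monoid on X (multinomials). *)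
From HB Require Import structures.
From mathcomp Require Import all_boot all_order all_algebra.
From mathcomp Require Import monalg.

Set Implicit Arguments.
Unset Strict Implicit.
Unset Printing Implicit Defensive.

Import GRing.Theory.
Local Open Scope ring_scope.

(* generators: inl (i,j) = u_ij, inr (i,j) = v_ij *)
Definition Hgen (m n : nat) : finType := (('I_m * 'I_n) + ('I_m * 'I_n))%type.

Definition FreeAlg (k : fieldType) (m n : nat) := {malg k[{fmonom (Hgen m n)}]}.

Definition gen (k : fieldType) (m n : nat) (x : Hgen m n) : FreeAlg k m n :=
  << fmu x >>.

Definition Umx (k : fieldType) (m n : nat) : 'M[FreeAlg k m n]_(m, n) :=
  \matrix_(i, j) gen k (inl (i, j)).
Definition Vmx (k : fieldType) (m n : nat) : 'M[FreeAlg k m n]_(m, n) :=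
  \matrix_(i, j) gen k (inr (i, j)).

Definition cmx (k : fieldType) (m n p q : nat) (M : 'M[k]_(p, q))
  : 'M[FreeAlg k m n]_(p, q) := map_mx (fun c => c%:MP) M.

Definition Hrel (k : fieldType) (m n : nat) (E : 'M[k]_m) (F : 'M[k]_n)
    (r : FreeAlg k m n) : Prop :=
  let u := Umx k m n in let v := Vmx k m n in
  let E' := cmx m n (invmx E) in let F' := cmx m n F in
  (exists i j : 'I_m, r = (u *m v^T - 1%:M) i j) \/
  (exists i j : 'I_m, r = (v *m F' *m u^T *m E' - 1%:M) i j) \/
  (exists i j : 'I_n, r = (v^T *m u - 1%:M) i j) \/
  (exists i j : 'I_n, r = (F' *m u^T *m E' *m v - 1%:M) i j).

Definition is_ideal (A : ringType) (J : A -> Prop) : Prop :=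
  J 0 /\ (forall x y, J x -> J y -> J (x + y)) /\
  (forall a x b, J x -> J (a * x * b)).

Definition gen_ideal (A : ringType) (S : A -> Prop) (x : A) : Prop :=
  forall J : A -> Prop, is_ideal J -> (forall s, S s -> J s) -> J x.

(* the defining ideal of H(E,F) = FreeAlg / Hideal E F *)
Definition Hideal (k : fieldType) (m n : nat) (E : 'M[k]_m) (F : 'M[k]_n) :=
  gen_ideal (@Hrel k m n E F).

(* A/I and B/J are isomorphic as (unital) k-algebras: written out as a pair of
   k-algebra morphisms between the free algebras that descend to the quotients
   and induce mutually inverse maps there. *)
Definition quot_alg_iso (k : fieldType) (A B : lalgType k)
    (I : A -> Prop) (J : B -> Prop) : Prop :=
  exists (f : {lrmorphism A -> B}) (g : {lrmorphism B -> A}),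
    (forall x, I x -> J (f x)) /\ (forall y, J y -> I (g y)) /\
    (forall x, I (g (f x) - x)) /\ (forall y, J (f (g y) - y)).

Definition H_iso (k : fieldType) (m n : nat)
    (E E' : 'M[k]_m) (F F' : 'M[k]_n) : Prop :=
  quot_alg_iso (Hideal E F) (Hideal E' F').

(* Main.v *)
Require Import Defs.
From HB Require Import structures.
From mathcomp Require Import all_boot all_order all_algebra.
From mathcomp Require Import monalg.
Set Implicit Arguments.
Unset Strict Implicit.
Unset Printing Implicit Defensive.
Import GRing.Theory.
Local Open Scope ring_scope.

Section Lift.
Variables (k : fieldType) (m n : nat).
Local Notation A := (FreeAlg k m n).
Local Notation X := (Hgen m n).

Lemma malgC_central (c : k) (g : A) : g * c%:MP = c%:MP * g.
Proof.
rewrite mul_malgC malgM_def fgmulgU malgZ_def /fgscale.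
by apply: eq_bigr => w _; rewrite mulm1 mulrC.
Qed.

Variable phi : X -> A.
Definition hmon (w : {fmonom X}) : A := \prod_(x <- fmonom_val w) phi x.

Lemma hmon_mm : mmorphism hmon.
Proof.
split; last by rewrite /hmon fm1 big_nil.
by move=> w1 w2; rewrite /hmon fmM big_cat.
Qed.

HB.instance Definition _ := isMultiplicative.Build {fmonom X} A hmon hmon_mm.

Definition flift : A -> A := mmap (@malgC _ k) hmon.

Lemma flift_mult : multiplicative flift.
Proof.
apply: commr_mmap_is_multiplicative => g w w'.
by rewrite /GRing.comm malgC_central.
Qed.

Lemma flift_add : GRing.zmod_morphism flift.
Proof. by move=> x y; rewrite /flift mmapB. Qed.
HB.instance Definition _ := GRing.isZmodMorphism.Build A A flift flift_add.
HB.instance Definition _ := GRing.isMultiplicative.Build A A flift flift_mult.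

Lemma flift_scale : scalable flift.
Proof.
by move=> c g; rewrite /flift mmapZ -mul_malgC.
Qed.
HB.instance Definition _ := GRing.isScalable.Build k A A *:%R flift flift_scale.

Definition fliftL : {lrmorphism A -> A} := flift.

Lemma flift_gen x : flift (gen k x) = phi x.
Proof. by rewrite /flift /gen mmapU /hmon fmU big_seq1 /= mul1r. Qed.

Lemma flift_C c : flift c%:MP = c%:MP.
Proof. by rewrite /flift mmapU /hmon fm1 big_nil mulr1. Qed.

End Lift.

Section Uniq.
Variables (k : fieldType) (m n : nat).
Local Notation A := (FreeAlg k m n).
Local Notation X := (Hgen m n).

Lemma monU_prod (s : seq X) :
  (<< FMonom s >> : A) = \prod_(x <- s) gen k x.
Proof.
elim: s => [|x s IH].
  rewrite big_nil; have -> : FMonom [::] = (mone : {fmonom X}).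
    by apply/eqP; rewrite fmP fm1.
  by [].
rewrite big_cons -IH /gen.
have -> : FMonom (x :: s) = mmul (fmu x) (FMonom s).
  by apply/eqP; rewrite fmP fmM fmU.
by rewrite malgM_def fgmulUU mulr1.
Qed.

Lemma monUZ (c : k) (w : {fmonom X}) : (<< c *g w >> : A) = c *: << w >>.
Proof. by rewrite -mul_malgC malgM_def fgmulUU mulr1 mul1m. Qed.

Lemma lrm_comp_id (f g : {lrmorphism A -> A}) :
  (forall x, g (f (gen k x)) = gen k x) -> forall y, g (f y) = y.
Proof.
move=> H y; rewrite [in RHS](monalgE y) [in LHS](monalgE y).
rewrite !raddf_sum; apply: eq_bigr => w _.
rewrite monUZ; set z := << _ >>; set c := y@_w.
transitivity (g (c *: f z)); first by congr (g _); exact: (linearZ_LR f c z).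
transitivity (c *: g (f z)); first exact: (linearZ_LR g c (f z)).
congr (_ *: _).
rewrite /z; clear z c; case: w => s; rewrite monU_prod !rmorph_prod.
by apply: eq_bigr => x _; exact: H.
Qed.
End Uniq.

Section Ideals.
Variable R : ringType.

Lemma gen_ideal_is_ideal (S : R -> Prop) : is_ideal (gen_ideal S).
Proof.
split; first by move=> J [J0 _].
split.
  move=> x y Hx Hy J HJ HS; have HJ' := HJ; case: HJ' => _ [HD _].
  by apply: HD; [apply: Hx|apply: Hy].
move=> a x b Hx J HJ HS; have HJ' := HJ; case: HJ' => _ [_ HM].
by apply: HM; apply: Hx.
Qed.

Lemma gen_ideal_sub (S : R -> Prop) s : S s -> gen_ideal S s.
Proof. by move=> Ss J _ HS; apply: HS. Qed.

Lemma gen_ideal_ext (S S' : R -> Prop) : (forall r, S r <-> S' r) ->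
  forall x, gen_ideal S x <-> gen_ideal S' x.
Proof.
move=> H x; split=> Hx J HJ HS; apply: Hx => // s Hs; apply: HS; by apply/H.
Qed.

Lemma ideal_sum (J : R -> Prop) (I : Type) (r : seq I) (F : I -> R) :
  is_ideal J -> (forall i, J (F i)) -> J (\sum_(i <- r) F i).
Proof.
move=> [J0 [JD _]] HF; elim: r => [|i r IH]; first by rewrite big_nil.
by rewrite big_cons; apply: JD.
Qed.

Lemma ideal_mx (J : R -> Prop) p q r s (L : 'M[R]_(p, q)) (N : 'M[R]_(q, r))
    (M : 'M[R]_(r, s)) :
  is_ideal J -> (forall i j, J (N i j)) -> forall i j, J ((L *m N *m M) i j).
Proof.
move=> HJ HN i j; rewrite !mxE; apply: ideal_sum => // l.
rewrite !mxE mulr_suml; apply: ideal_sum => // l'.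
by case: HJ => _ [_ HM]; apply: HM.
Qed.

End Ideals.

Lemma ideal_pull (R R' : ringType) (f : {rmorphism R -> R'}) (S : R -> Prop)
   (S' : R' -> Prop) :
  (forall s, S s -> gen_ideal S' (f s)) ->
  forall x, gen_ideal S x -> gen_ideal S' (f x).
Proof.
move=> H x Hx; apply: (Hx (fun y => gen_ideal S' (f y))) => //.
have [J0 [JD JM]] := gen_ideal_is_ideal S'.
split; first by rewrite rmorph0.
split; first by move=> a b Ha Hb; rewrite rmorphD; apply: JD.
by move=> a y b Hy; rewrite !rmorphM; apply: JM.
Qed.

Section Mx.
Variables (k : fieldType) (m n : nat).
Local Notation A := (FreeAlg k m n).
Local Notation X := (Hgen m n).
Local Notation c := (@cmx k m n _ _).

Lemma cmxM p q r (M : 'M[k]_(p, q)) (N : 'M[k]_(q, r)) :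
  c (M *m N) = c M *m c N.
Proof. exact: map_mxM. Qed.

Lemma cmx1 p : c (1%:M : 'M[k]_p) = 1%:M.
Proof. exact: map_mx1. Qed.

Lemma cmxT p q (M : 'M[k]_(p, q)) : c M^T = (c M)^T.
Proof. by rewrite /cmx map_trmx. Qed.

Lemma cmxKl p q r (M : 'M[k]_(p, q)) (N : 'M[k]_(q, p)) (Y : 'M[A]_(p, r)) :
  M *m N = 1%:M -> c M *m (c N *m Y) = Y.
Proof. by move=> H; rewrite mulmxA -cmxM H cmx1 mul1mx. Qed.

Lemma cmxK p q (M : 'M[k]_(p, q)) (N : 'M[k]_(q, p)) :
  M *m N = 1%:M -> c M *m c N = 1%:M.
Proof. by move=> H; rewrite -cmxM H cmx1. Qed.

Lemma tr_cmxl p q r (M : 'M[k]_(p, q)) (Y : 'M[A]_(q, r)) :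
  (c M *m Y)^T = Y^T *m c M^T.
Proof.
apply/matrixP => i j; rewrite !mxE; apply: eq_bigr => l _.
by rewrite !mxE malgC_central.
Qed.

Lemma tr_cmxr p q r (M : 'M[k]_(q, r)) (Y : 'M[A]_(p, q)) :
  (Y *m c M)^T = c M^T *m Y^T.
Proof.
apply/matrixP => i j; rewrite !mxE; apply: eq_bigr => l _.
by rewrite !mxE malgC_central.
Qed.

Lemma conjB1 p q (L : 'M[A]_(p, q)) (N : 'M[A]_q) (M : 'M[A]_(q, p)) :
  L *m M = 1%:M -> L *m (N - 1%:M) *m M = L *m N *m M - 1%:M.
Proof. by move=> H; rewrite mulmxBr mulmx1 mulmxBl H. Qed.

Definition phiUV (U0 V0 : 'M[A]_(m, n)) (x : X) : A :=
  match x with inl (i, j) => U0 i j | inr (i, j) => V0 i j end.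

Definition liftUV U0 V0 : A -> A := flift (phiUV U0 V0).

Lemma liftUV_U U0 V0 : map_mx (liftUV U0 V0) (Umx k m n) = U0.
Proof. by apply/matrixP => i j; rewrite !mxE /liftUV flift_gen. Qed.

Lemma liftUV_V U0 V0 : map_mx (liftUV U0 V0) (Vmx k m n) = V0.
Proof. by apply/matrixP => i j; rewrite !mxE /liftUV flift_gen. Qed.

Lemma liftUV_UT U0 V0 : map_mx (liftUV U0 V0) (Umx k m n)^T = U0^T.
Proof. by rewrite -map_trmx liftUV_U. Qed.

Lemma liftUV_VT U0 V0 : map_mx (liftUV U0 V0) (Vmx k m n)^T = V0^T.
Proof. by rewrite -map_trmx liftUV_V. Qed.

Lemma liftUV_C U0 V0 p q (M : 'M[k]_(p, q)) : map_mx (liftUV U0 V0) (c M) = c M.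
Proof. by apply/matrixP => i j; rewrite !mxE /liftUV flift_C. Qed.

Local Opaque Umx Vmx.
Lemma Hrel_map (E : 'M[k]_m) (F : 'M[k]_n) U0 V0 (J : A -> Prop) :
  is_ideal J ->
  (forall i j, J ((U0 *m V0^T - 1%:M) i j)) ->
  (forall i j, J ((V0 *m c F *m U0^T *m c (invmx E) - 1%:M) i j)) ->
  (forall i j, J ((V0^T *m U0 - 1%:M) i j)) ->
  (forall i j, J ((c F *m U0^T *m c (invmx E) *m V0 - 1%:M) i j)) ->
  forall r, Hrel E F r -> J (liftUV U0 V0 r).
Proof.
move=> HJ H1 H2 H3 H4 r.
have mB p (Y : 'M[A]_p) i j : liftUV U0 V0 ((Y - 1%:M) i j)
    = (map_mx (liftUV U0 V0) Y - 1%:M) i j.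
  by rewrite /liftUV !mxE raddfB; congr (_ - _); exact: rmorph_nat.
rewrite /Hrel; case=> [[i [j ->]]|[[i [j ->]]|[[i [j ->]]|[i [j ->]]]]];
  rewrite mB !map_mxM.
- by rewrite liftUV_U liftUV_VT; exact: H1.
- set f := liftUV U0 V0.
  have -> : map_mx f (Vmx k m n) = V0 by exact: liftUV_V.
  have -> : map_mx f (c F) = c F by exact: liftUV_C.
  have -> : map_mx f (c (invmx E)) = c (invmx E) by exact: liftUV_C.
  have -> : map_mx f (Umx k m n)^T = U0^T by exact: liftUV_UT.
  exact: H2.
- set f := liftUV U0 V0.
  have -> : map_mx f (Umx k m n) = U0 by exact: liftUV_U.
  have -> : map_mx f (Vmx k m n)^T = V0^T by exact: liftUV_VT.
  exact: H3.
- set f := liftUV U0 V0.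
  have -> : map_mx f (Vmx k m n) = V0 by exact: liftUV_V.
  have -> : map_mx f (c F) = c F by exact: liftUV_C.
  have -> : map_mx f (c (invmx E)) = c (invmx E) by exact: liftUV_C.
  have -> : map_mx f (Umx k m n)^T = U0^T by exact: liftUV_UT.
  exact: H4.
Qed.
End Mx.

Lemma inv_uniq (k : fieldType) p (M N : 'M[k]_p) : M *m N = 1%:M -> invmx M = N.
Proof.
move=> H; have [Mu _] := mulmx1_unit H.
by rewrite -[invmx M]mulmx1 -H mulmxA mulVmx // mul1mx.
Qed.

Lemma trK1 (k : fieldType) p (M N : 'M[k]_p) : N *m M = 1%:M -> M^T *m N^T = 1%:M.
Proof. by move=> H; rewrite -trmx_mul H trmx1. Qed.

Section Rels.
Variables (k : fieldType) (m n : nat).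
Local Notation A := (FreeAlg k m n).
Local Notation c := (@cmx k m n _ _).
Local Notation u := (Umx k m n).
Local Notation v := (Vmx k m n).

Variables (E : 'M[k]_m) (F : 'M[k]_n).
Local Notation J := (Hideal E F).

Lemma JI : is_ideal J. Proof. exact: gen_ideal_is_ideal. Qed.

Lemma rel1 i j : J ((u *m v^T - 1%:M) i j).
Proof. by apply: gen_ideal_sub; left; exists i, j. Qed.
Lemma rel2 i j : J ((v *m c F *m u^T *m c (invmx E) - 1%:M) i j).
Proof. by apply: gen_ideal_sub; right; left; exists i, j. Qed.
Lemma rel3 i j : J ((v^T *m u - 1%:M) i j).
Proof. by apply: gen_ideal_sub; right; right; left; exists i, j. Qed.
Lemma rel4 i j : J ((c F *m u^T *m c (invmx E) *m v - 1%:M) i j).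
Proof. by apply: gen_ideal_sub; right; right; right; exists i, j. Qed.

Lemma conj_rel p q (L : 'M[A]_(p, q)) (N : 'M[A]_q) (M : 'M[A]_(q, p)) (Z : 'M[A]_p) :
  (forall i j, J ((N - 1%:M) i j)) -> L *m M = 1%:M -> Z = L *m N *m M - 1%:M ->
  forall i j, J (Z i j).
Proof.
move=> HN HLM ->; rewrite -conjB1 //; exact: (ideal_mx _ _ JI HN).
Qed.
End Rels.

Lemma conj_rel1 (k : fieldType) (m n : nat) (E : 'M[k]_m) (F : 'M[k]_n) p
  (N Z : 'M[FreeAlg k m n]_p) :
  (forall i j, Hideal E F ((N - 1%:M) i j)) -> Z = N - 1%:M ->
  forall i j, Hideal E F (Z i j).
Proof. by move=> HN -> i j; apply: HN. Qed.

Lemma id_p2r2 (R : pzRingType) m n (a b ei : 'M[R]_m) (q f qi : 'M[R]_n)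
  (uu vv : 'M[R]_(m,n)) : a *m b = 1%:M ->
  a *m vv *m q *m f *m (qi *m (uu^T *m b)) *m ei =
  a *m (vv *m (q *m f *m qi) *m uu^T *m (b *m ei *m a)) *m b.
Proof. by move=> h; rewrite -!mulmxA h mulmx1. Qed.

Lemma id_p2r3 (R : pzRingType) m n (pit pt : 'M[R]_m) (qt qit : 'M[R]_n)
  (uu vv : 'M[R]_(m,n)) : pit *m pt = 1%:M ->
  qt *m (vv^T *m pit) *m (pt *m uu *m qit) = qt *m (vv^T *m uu) *m qit.
Proof. by move=> h; rewrite -!mulmxA (mulmxA pit) h mul1mx. Qed.

Lemma id_p2r4 (R : pzRingType) m n (p ei pi : 'M[R]_m) (q f qi : 'M[R]_n)
  (uu vv : 'M[R]_(m,n)) : qi *m q = 1%:M ->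
  f *m (qi *m (uu^T *m p)) *m ei *m (pi *m vv *m q) =
  qi *m (q *m f *m qi *m uu^T *m (p *m ei *m pi) *m vv) *m q.
Proof. by move=> h; rewrite -!mulmxA [in RHS](mulmxA qi) h mul1mx. Qed.

Section G.
Variables (R : pzRingType) (m n : nat).
Implicit Types (e ei et eit : 'M[R]_m) (f fi ft fit : 'M[R]_n) (uu vv : 'M[R]_(m,n))
  (ut vt : 'M[R]_(n,m)).

Lemma id_f1 vv fit ut et : vv *m (fit *m (ut *m et)) = vv *m fit *m ut *m et.
Proof. by rewrite !mulmxA. Qed.
Lemma id_f2 e uu fi f vt ei : fi *m f = 1%:M ->
  e *m uu *m fi *m f *m vt *m ei = e *m (uu *m vt) *m ei.
Proof. by move=> h; rewrite -!mulmxA (mulmxA fi) h mul1mx. Qed.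
Lemma id_f3 fit ut et vv : fit *m (ut *m et) *m vv = fit *m ut *m et *m vv.
Proof. by rewrite !mulmxA. Qed.
Lemma id_f4 f vt ei e uu fi : ei *m e = 1%:M ->
  f *m vt *m ei *m (e *m uu *m fi) = f *m (vt *m uu) *m fi.
Proof. by move=> h; rewrite -!mulmxA (mulmxA ei) h mul1mx. Qed.
Lemma id_g1 ei vv f ut e : ei *m e = 1%:M ->
  ei *m vv *m f *m ut = ei *m (vv *m f *m ut *m ei) *m e.
Proof. by move=> h; rewrite -!mulmxA h mulmx1. Qed.
Lemma id_g2 uu fit ft vt eit et : fit *m ft = 1%:M -> eit *m et = 1%:M ->
  uu *m fit *m (ft *m (vt *m eit)) *m et = uu *m vt.
Proof. by move=> h1 h2; rewrite -!mulmxA h2 mulmx1 (mulmxA fit) h1 mul1mx. Qed.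
Lemma id_g3 ut ei vv f fi : fi *m f = 1%:M ->
  ut *m (ei *m vv *m f) = fi *m (f *m ut *m ei *m vv) *m f.
Proof. by move=> h; rewrite -!mulmxA (mulmxA fi) h mul1mx. Qed.
Lemma id_g4 fit ft vt eit et uu : fit *m ft = 1%:M -> eit *m et = 1%:M ->
  fit *m (ft *m (vt *m eit)) *m et *m uu = vt *m uu.
Proof. by move=> h1 h2; rewrite -!mulmxA (mulmxA eit) h2 mul1mx (mulmxA fit) h1 mul1mx. Qed.
End G.

Lemma id_l2 (R : pzRingType) m n (vv : 'M[R]_(m,n)) (f sn : 'M[R]_n) (ut : 'M[R]_(n,m))
  (sm sim ei : 'M[R]_m) : sn *m ut = ut *m sm -> sm *m sim = 1%:M ->
  vv *m (f *m sn) *m ut *m (sim *m ei) = vv *m f *m ut *m ei.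
Proof.
by move=> h1 h2; rewrite -!mulmxA (mulmxA sn) h1 -mulmxA (mulmxA sm) h2 mul1mx.
Qed.
Lemma id_l4 (R : pzRingType) m n (vv : 'M[R]_(m,n)) (f sn : 'M[R]_n) (ut : 'M[R]_(n,m))
  (sm sim ei : 'M[R]_m) : sn *m ut = ut *m sm -> sm *m sim = 1%:M ->
  f *m sn *m ut *m (sim *m ei) *m vv = f *m ut *m ei *m vv.
Proof.
by move=> h1 h2; rewrite -!mulmxA (mulmxA sn) h1 -mulmxA (mulmxA sm) h2 mul1mx.
Qed.

Lemma id_cancel (R : pzRingType) m n (a b : 'M[R]_m) (c d : 'M[R]_n) (x : 'M[R]_(m,n)) :
  a *m b = 1%:M -> c *m d = 1%:M -> a *m (b *m x *m c) *m d = x.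
Proof. by move=> h1 h2; rewrite -!mulmxA h2 mulmx1 mulmxA h1 mul1mx. Qed.

Section Part2.
Variables (k : fieldType) (m n : nat).
Local Notation A := (FreeAlg k m n).
Local Notation c := (@cmx k m n _ _).
Local Notation u := (Umx k m n).
Local Notation v := (Vmx k m n).

Lemma part2_map (E P : 'M[k]_m) (F Q : 'M[k]_n) :
  E \in unitmx -> P \in unitmx -> Q \in unitmx ->
  forall x, Hideal E F x ->
  Hideal (P *m E *m invmx P) (Q *m F *m invmx Q)
    (liftUV (c P^T *m u *m c (invmx Q)^T) (c (invmx P) *m v *m c Q) x).
Proof.
move=> Eu Pu Qu.
set Pi := invmx P; set Qi := invmx Q; set Ei := invmx E.
have PPi : P *m Pi = 1%:M by rewrite mulmxV.
have PiP : Pi *m P = 1%:M by rewrite mulVmx.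
have QQi : Q *m Qi = 1%:M by rewrite mulmxV.
have QiQ : Qi *m Q = 1%:M by rewrite mulVmx.
have EEi : E *m Ei = 1%:M by rewrite mulmxV.
have iE' : invmx (P *m E *m Pi) = P *m Ei *m Pi.
  apply: inv_uniq.
  by rewrite -!mulmxA (mulmxA Pi) PiP mul1mx (mulmxA E) EEi mul1mx PPi.
apply: ideal_pull; apply: Hrel_map; first exact: JI.
- apply: (conj_rel (L := c P^T) (M := c Pi^T) (@rel1 _ _ _ _ _)).
    by apply: cmxK; apply: trK1.
  by rewrite tr_cmxr tr_cmxl -!mulmxA (cmxKl _ (trK1 QQi)).
- apply: (conj_rel (L := c Pi) (M := c P) (@rel2 _ _ _ _ _)).
    exact: cmxK.
  rewrite tr_cmxr (tr_cmxl P^T u) (trmxK Qi) (trmxK P) iE' (cmxM _ _ (Q *m F) Qi) (cmxM _ _ Q F) (cmxM _ _ (P *m Ei) Pi) (cmxM _ _ P Ei) -/Ei.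
  move: (cmxK m n PiP); move: (c Pi) (c P) (c Q) (c F) (c Qi) (c Ei) u v => a b q f qi ei uu vv h.
  apply: (congr1 (fun X => X - 1%:M)); exact: id_p2r2 h.
- apply: (conj_rel (L := c Q^T) (M := c Qi^T) (@rel3 _ _ _ _ _)).
    by apply: cmxK; apply: trK1.
  rewrite tr_cmxr tr_cmxl.
  move: (cmxK m n (trK1 PPi)); move: (c Q^T) (c Pi^T) (c P^T) (c Qi^T) u v => qt pit pt qit uu vv h.
  apply: (congr1 (fun X => X - 1%:M)); exact: id_p2r3 h.
- apply: (conj_rel (L := c Qi) (M := c Q) (@rel4 _ _ _ _ _)).
    exact: cmxK.
  rewrite tr_cmxr (tr_cmxl P^T u) (trmxK Qi) (trmxK P) iE' (cmxM _ _ (Q *m F) Qi) (cmxM _ _ Q F) (cmxM _ _ (P *m Ei) Pi) (cmxM _ _ P Ei) -/Ei.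
  move: (cmxK m n QiQ); move: (c P) (c Ei) (c Pi) (c Q) (c F) (c Qi) u v => p ei pi q f qi uu vv h.
  apply: (congr1 (fun X => X - 1%:M)); exact: id_p2r4 h.
Qed.
End Part2.

Section Part3.
Variables (k : fieldType) (m n : nat).
Local Notation A := (FreeAlg k m n).
Local Notation c := (@cmx k m n _ _).
Local Notation u := (Umx k m n).
Local Notation v := (Vmx k m n).

Lemma part3_f (E : 'M[k]_m) (F : 'M[k]_n) :
  E \in unitmx -> F \in unitmx ->
  forall x, Hideal E F x ->
  Hideal (invmx E^T) (invmx F^T) (liftUV v (c E *m u *m c (invmx F)) x).
Proof.
move=> Eu Fu.
set Fi := invmx F; set Ei := invmx E.
have FFi : F *m Fi = 1%:M by rewrite mulmxV.
have FiF : Fi *m F = 1%:M by rewrite mulVmx.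
have EEi : E *m Ei = 1%:M by rewrite mulmxV.
have EiE : Ei *m E = 1%:M by rewrite mulVmx.
have iF : invmx F^T = Fi^T by rewrite trmx_inv.
apply: ideal_pull; apply: Hrel_map; first exact: JI.
- apply: (conj_rel1 (@rel2 _ _ _ _ _)).
  rewrite (invmxK E^T) iF tr_cmxr (tr_cmxl E u).
  move: v (u^T) (c Fi^T) (c E^T) => vv ut fit et.
  apply: (congr1 (fun X => X - 1%:M)); exact: id_f1.
- apply: (conj_rel (L := c E) (M := c Ei) (@rel1 _ _ _ _ _)).
    exact: cmxK.
  rewrite -/Ei.
  move: (cmxK m n FiF); move: u (v^T) (c E) (c Fi) (c F) (c Ei) => uu vt e fi f ei h.
  apply: (congr1 (fun X => X - 1%:M)); exact: id_f2 h.
- apply: (conj_rel1 (@rel4 _ _ _ _ _)).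
  rewrite (invmxK E^T) iF tr_cmxr (tr_cmxl E u).
  move: v (u^T) (c Fi^T) (c E^T) => vv ut fit et.
  apply: (congr1 (fun X => X - 1%:M)); exact: id_f3.
- apply: (conj_rel (L := c F) (M := c Fi) (@rel3 _ _ _ _ _)).
    exact: cmxK.
  rewrite -/Ei.
  move: (cmxK m n EiE); move: u (v^T) (c F) (c Ei) (c E) (c Fi) => uu vt f ei e fi h.
  apply: (congr1 (fun X => X - 1%:M)); exact: id_f4 h.
Qed.

Lemma part3_g (E : 'M[k]_m) (F : 'M[k]_n) :
  E \in unitmx -> F \in unitmx ->
  forall x, Hideal (invmx E^T) (invmx F^T) x ->
  Hideal E F (liftUV (c (invmx E) *m v *m c F) u x).
Proof.
move=> Eu Fu.
set Fi := invmx F; set Ei := invmx E.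
have FFi : F *m Fi = 1%:M by rewrite mulmxV.
have FiF : Fi *m F = 1%:M by rewrite mulVmx.
have EEi : E *m Ei = 1%:M by rewrite mulmxV.
have EiE : Ei *m E = 1%:M by rewrite mulVmx.
have iF : invmx F^T = Fi^T by rewrite trmx_inv.
apply: ideal_pull; apply: Hrel_map; first exact: JI.
- apply: (conj_rel (L := c Ei) (M := c E) (@rel2 _ _ _ _ _)).
    exact: cmxK.
  rewrite -/Ei.
  move: (cmxK m n EiE); move: v (u^T) (c Ei) (c F) (c E) => vv ut ei f e h.
  apply: (congr1 (fun X => X - 1%:M)); exact: id_g1 h.
- apply: (conj_rel1 (@rel1 _ _ _ _ _)).
  rewrite (invmxK E^T) iF tr_cmxr (tr_cmxl Ei v).
  move: (cmxK m n (trK1 FFi)) (cmxK m n (trK1 EEi)); move: u (v^T) (c Fi^T) (c F^T) (c Ei^T) (c E^T) => uu vt fit ft eit et h1 h2.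
  apply: (congr1 (fun X => X - 1%:M)); exact: id_g2 h1 h2.
- apply: (conj_rel (L := c Fi) (M := c F) (@rel4 _ _ _ _ _)).
    exact: cmxK.
  rewrite -/Ei.
  move: (cmxK m n FiF); move: v (u^T) (c Ei) (c F) (c Fi) => vv ut ei f fi h.
  apply: (congr1 (fun X => X - 1%:M)); exact: id_g3 h.
- apply: (conj_rel1 (@rel3 _ _ _ _ _)).
  rewrite (invmxK E^T) iF tr_cmxr (tr_cmxl Ei v).
  move: (cmxK m n (trK1 FFi)) (cmxK m n (trK1 EEi)); move: u (v^T) (c Fi^T) (c F^T) (c Ei^T) (c E^T) => uu vt fit ft eit et h1 h2.
  apply: (congr1 (fun X => X - 1%:M)); exact: id_g4 h1 h2.
Qed.
End Part3.

Section Scal.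
Variables (k : fieldType) (m n : nat).
Local Notation A := (FreeAlg k m n).
Local Notation c := (@cmx k m n _ _).

Lemma cmx_scal_comm p q (a : k) (Y : 'M[A]_(p,q)) :
  c (a%:M : 'M_p) *m Y = Y *m c (a%:M : 'M_q).
Proof.
apply/matrixP => i j; rewrite !mxE (bigD1 i) //= [in RHS](bigD1 j) //= !big1 ?addr0.
- by rewrite !mxE !eqxx !mulr1n malgC_central.
- by move=> l /negbTE nl; rewrite !mxE nl mulr0n rmorph0 mulr0.
- by move=> l /negbTE nl; rewrite !mxE eq_sym nl mulr0n rmorph0 mul0r.
Qed.
End Scal.

Section Part1.
Variables (k : fieldType) (m n : nat).
Local Notation A := (FreeAlg k m n).
Local Notation c := (@cmx k m n _ _).
Local Notation u := (Umx k m n).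
Local Notation v := (Vmx k m n).

Lemma part1 (l : k) (E : 'M[k]_m) (F : 'M[k]_n) :
  l != 0 -> E \in unitmx ->
  forall x : A, Hideal (l *: E) (l *: F) x <-> Hideal E F x.
Proof.
move=> l0 Eu; apply: gen_ideal_ext => r.
have iZ : invmx (l *: E) = l^-1 *: invmx E.
  by rewrite invmxZ // unitmxZ // unitfE.
have cF : c (l *: F) = c F *m c (l%:M) by rewrite -cmxM mul_mx_scalar.
have cE : c (l^-1 *: invmx E) = c (l^-1%:M) *m c (invmx E) by rewrite -cmxM mul_scalar_mx.
have cc : c (l%:M : 'M_m) *m c (l^-1%:M) = 1%:M.
  by apply: cmxK; rewrite -scalar_mxM mulfV.
have com : c (l%:M : 'M_n) *m u^T = u^T *m c (l%:M : 'M_m) by apply: cmx_scal_comm.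
have e2 : v *m c (l *: F) *m u^T *m c (invmx (l *: E)) = v *m c F *m u^T *m c (invmx E).
  rewrite iZ cF cE; move: com cc.
  move: v (u^T) (c F) (c (l%:M : 'M_n)) (c (l%:M : 'M_m)) (c (l^-1%:M : 'M_m)) (c (invmx E))
    => vv ut f sn sm sim ei h1 h2.
  exact: id_l2 h1 h2.
have e4 : c (l *: F) *m u^T *m c (invmx (l *: E)) *m v = c F *m u^T *m c (invmx E) *m v.
  rewrite iZ cF cE; move: com cc.
  move: v (u^T) (c F) (c (l%:M : 'M_n)) (c (l%:M : 'M_m)) (c (l^-1%:M : 'M_m)) (c (invmx E))
    => vv ut f sn sm sim ei h1 h2.
  exact: id_l4 h1 h2.
rewrite /Hrel; cbv zeta.
move: e2 e4; move: (Umx k m n) (Vmx k m n) => uu vv e2 e4.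
have t2 i j : (vv *m c (l *: F) *m uu^T *m c (invmx (l *: E)) - 1%:M) i j
   = (vv *m c F *m uu^T *m c (invmx E) - 1%:M) i j.
  exact: (congr1 (fun M => (M - 1%:M) i j) e2).
have t4 i j : (c (l *: F) *m uu^T *m c (invmx (l *: E)) *m vv - 1%:M) i j
   = (c F *m uu^T *m c (invmx E) *m vv - 1%:M) i j.
  exact: (congr1 (fun M => (M - 1%:M) i j) e4).
split.
- case=> [H|[[i [j Hr]]|[H|[i [j Hr]]]]]; [by left|right; left|by right; right; left|right; right; right];
  by exists i, j; rewrite Hr; exact: t2 || exact: t4.
- case=> [H|[[i [j Hr]]|[H|[i [j Hr]]]]]; [by left|right; left|by right; right; left|right; right; right];
  by exists i, j; rewrite Hr; exact: (esym (t2 i j)) || exact: (esym (t4 i j)).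
Qed.
End Part1.

Section Fin.
Variables (k : fieldType) (m n : nat).
Local Notation A := (FreeAlg k m n).
Local Notation c := (@cmx k m n _ _).
Local Notation u := (Umx k m n).
Local Notation v := (Vmx k m n).

Lemma map_cxc U1 V1 (X : 'M[k]_m) (Y : 'M[k]_n) (Z : 'M[A]_(m, n)) :
  map_mx (liftUV U1 V1) (c X *m Z *m c Y) = c X *m map_mx (liftUV U1 V1) Z *m c Y.
Proof.
rewrite !map_mxM; set f := liftUV U1 V1.
have -> : map_mx f (c X) = c X by exact: liftUV_C.
have -> : map_mx f (c Y) = c Y by exact: liftUV_C.
by [].
Qed.

Lemma comp_gen U0 V0 U1 V1 :
  map_mx (liftUV U1 V1) U0 = u -> map_mx (liftUV U1 V1) V0 = v ->
  forall x, fliftL (phiUV U1 V1) (fliftL (phiUV U0 V0) (gen k x)) = gen k x.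
Proof.
move=> hU hV [[i j]|[i j]].
- have e1 := congr1 (liftUV U1 V1) (flift_gen (phiUV U0 V0) (inl (i, j))).
  have e2 := congr1 (fun M : 'M[A]_(m, n) => M i j) hU; rewrite /= !mxE in e2.
  exact: (etrans e1 e2).
- have e1 := congr1 (liftUV U1 V1) (flift_gen (phiUV U0 V0) (inr (i, j))).
  have e2 := congr1 (fun M : 'M[A]_(m, n) => M i j) hV; rewrite /= !mxE in e2.
  exact: (etrans e1 e2).
Qed.
End Fin.

Theorem proposition4p2 (k : fieldType) (m n : nat) (lambda : k)
    (E P : 'M[k]_m) (F Q : 'M[k]_n) :
  lambda != 0 -> E \in unitmx -> P \in unitmx ->
  F \in unitmx -> Q \in unitmx ->
  (forall x : FreeAlg k m n,
      Hideal (lambda *: E) (lambda *: F) x <-> Hideal E F x) /\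
  H_iso E (P *m E *m invmx P) F (Q *m F *m invmx Q) /\
  H_iso E (invmx E^T) F (invmx F^T).
Proof.
move=> l0 Eu Pu Fu Qu; split; first exact: part1.
have I0 : forall (E' : 'M[k]_m) (F' : 'M[k]_n), Hideal E' F' 0.
  by move=> E' F'; case: (gen_ideal_is_ideal (@Hrel k m n E' F')).
split.
- pose U0 := cmx m n P^T *m Umx k m n *m cmx m n (invmx Q)^T.
  pose V0 := cmx m n (invmx P) *m Vmx k m n *m cmx m n Q.
  pose U1 := cmx m n (invmx P)^T *m Umx k m n *m cmx m n (invmx (invmx Q))^T.
  pose V1 := cmx m n (invmx (invmx P)) *m Vmx k m n *m cmx m n (invmx Q).
  have PiP : invmx P *m P = 1%:M by rewrite mulVmx.
  have PPi : P *m invmx P = 1%:M by rewrite mulmxV.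
  have QiQ : invmx Q *m Q = 1%:M by rewrite mulVmx.
  have QQi : Q *m invmx Q = 1%:M by rewrite mulmxV.
  have gf : forall y, fliftL (phiUV U1 V1) (fliftL (phiUV U0 V0) y) = y.
    apply: lrm_comp_id; apply: comp_gen.
    + rewrite /U0 map_cxc liftUV_U /U1 invmxK.
      move: (cmxK m n (trK1 PiP)) (cmxK m n (trK1 QiQ)).
      move: (Umx k m n) (cmx m n P^T) (cmx m n (invmx P)^T) (cmx m n Q^T) (cmx m n (invmx Q)^T)
        => x a b cc d h1 h2.
      exact: id_cancel h1 h2.
    + rewrite /V0 map_cxc liftUV_V /V1 invmxK.
      move: (cmxK m n PiP) (cmxK m n QiQ).
      move: (Vmx k m n) (cmx m n (invmx P)) (cmx m n P) (cmx m n (invmx Q)) (cmx m n Q)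
        => x a b cc d h1 h2.
      exact: id_cancel h1 h2.
  have fg : forall y, fliftL (phiUV U0 V0) (fliftL (phiUV U1 V1) y) = y.
    apply: lrm_comp_id; apply: comp_gen.
    + rewrite /U1 map_cxc liftUV_U /U0 invmxK.
      move: (cmxK m n (trK1 PPi)) (cmxK m n (trK1 QQi)).
      move: (Umx k m n) (cmx m n (invmx P)^T) (cmx m n P^T) (cmx m n (invmx Q)^T) (cmx m n Q^T)
        => x a b cc d h1 h2.
      exact: id_cancel h1 h2.
    + rewrite /V1 map_cxc liftUV_V /V0 invmxK.
      move: (cmxK m n PPi) (cmxK m n QQi).
      move: (Vmx k m n) (cmx m n P) (cmx m n (invmx P)) (cmx m n Q) (cmx m n (invmx Q))
        => x a b cc d h1 h2.
      exact: id_cancel h1 h2.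
  exists (fliftL (phiUV U0 V0)), (fliftL (phiUV U1 V1)).
  split; [|split; [|split]].
  + by move=> x Hx; exact: part2_map.
  + move=> y Hy.
    have eE : invmx P *m (P *m E *m invmx P) *m invmx (invmx P) = E.
      by rewrite invmxK !mulmxA PiP mul1mx -mulmxA PiP mulmx1.
    have eF : invmx Q *m (Q *m F *m invmx Q) *m invmx (invmx Q) = F.
      by rewrite invmxK !mulmxA QiQ mul1mx -mulmxA QiQ mulmx1.
    have := part2_map (E := P *m E *m invmx P) (P := invmx P) (F := Q *m F *m invmx Q)
      (Q := invmx Q) _ _ _ Hy.
    rewrite eE eF; apply.
    * by rewrite !unitmx_mul Pu Eu unitmx_inv Pu.
    * by rewrite unitmx_inv.
    * by rewrite unitmx_inv.
  + by move=> x; rewrite gf subrr.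
  + by move=> y; rewrite fg subrr.
- pose U0 := Vmx k m n.
  pose V0 := cmx m n E *m Umx k m n *m cmx m n (invmx F).
  pose U1 := cmx m n (invmx E) *m Vmx k m n *m cmx m n F.
  pose V1 := Umx k m n.
  have EiE : invmx E *m E = 1%:M by rewrite mulVmx.
  have EEi : E *m invmx E = 1%:M by rewrite mulmxV.
  have FiF : invmx F *m F = 1%:M by rewrite mulVmx.
  have FFi : F *m invmx F = 1%:M by rewrite mulmxV.
  have gf : forall y, fliftL (phiUV U1 V1) (fliftL (phiUV U0 V0) y) = y.
    apply: lrm_comp_id; apply: comp_gen.
    + exact: liftUV_V.
    + rewrite /V0 map_cxc liftUV_U /U1.
      move: (cmxK m n EEi) (cmxK m n FFi).
      move: (Vmx k m n) (cmx m n E) (cmx m n (invmx E)) (cmx m n F) (cmx m n (invmx F))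
        => x a b cc d h1 h2.
      exact: id_cancel h1 h2.
  have fg : forall y, fliftL (phiUV U0 V0) (fliftL (phiUV U1 V1) y) = y.
    apply: lrm_comp_id; apply: comp_gen.
    + rewrite /U1 map_cxc liftUV_V /V0.
      move: (cmxK m n EiE) (cmxK m n FiF).
      move: (Umx k m n) (cmx m n (invmx E)) (cmx m n E) (cmx m n (invmx F)) (cmx m n F)
        => x a b cc d h1 h2.
      exact: id_cancel h1 h2.
    + exact: liftUV_U.
  exists (fliftL (phiUV U0 V0)), (fliftL (phiUV U1 V1)).
  split; [|split; [|split]].
  + by move=> x Hx; exact: part3_f.
  + by move=> y Hy; exact: part3_g.
  + by move=> x; rewrite gf subrr.
  + by move=> y; rewrite fg subrr.
Qed.
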